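(* Under the standing setup below, let $\theta$ be a function on (an open subset of) $M$ with $e_2(\theta)=e_3(\theta)=0$ and $e_1(\theta)=-\lambda_2$ (such a function exists locally), and set $$V=\frac{-(b_1+i\lambda_2)E_0+E_1}{\sqrt{1+b_1^2+\lambda_2^2}}.$$ Then $D_{E_2}V=D_{E_3}V=0$ and $D_{E_1}V=3\lambda_2\, iV$. Consequently $V$ takes values in the unit circle of a fixed complex line $\mathbb{C}\,v\subset\mathbb{C}^4$, and writing $V=e^{it}v$ one has $e_1(t)=3\lambda_2$, $e_2(t)=e_3(t)=0$; in particular, after adding a constant to $\theta$, $\theta=-t/3$.
   Context: Standing setup: $\mathbb{C}P^3(4)$ carries the Fubini–Study metric of constant holomorphic sectional curvature $4$, complex structure $J$, and $\pi:S^7(1)\subset\mathbb{C}^4\to\mathbb{C}P^3(4)$ is the Hopf projection. $M$ is a connected $3$-dimensional non-minimal Lagrangian submanifold of $\mathbb{C}P^3(4)$ attaining equality at every point in $\delta_M\le 2+\tfrac32\|H\|^2$ (here $\delta_M=\tau-\inf K$, $\tau$ the scalar curvature, $H=\frac13\operatorname{trace}h$). Let $h$ be the second fundamental form and $C(X,Y,Z)=\langle h(X,Y),JZ\rangle$. Locally there is an orthonormal frame $e_1,e_2,e_3$ with $C(e_2,e_2,e_2)=-C(e_3,e_3,e_2)=:a$, $C(e_1,e_1,e_1)=4\lambda_2$, $C(e_2,e_2,e_1)=C(e_3,e_3,e_1)=\lambda_2$ with $\lambda_2\neq0$, and all other components zero up to symmetry. $E_0:M\to S^7(1)\subset\mathbb{C}^4$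 is a horizontal lift of $M$ (i.e. $\pi\circ E_0$ is the inclusion and $dE_0(X)$ is orthogonal to $E_0$ and $iE_0$), $E_j=dE_0(e_j)$, and $D$ is the flat connection of $\mathbb{C}^4=\mathbb{R}^8$; $D_{E_j}$ denotes differentiation along $e_j$. There is a smooth function $b_1$ such that $D_{E_1}E_1=4\lambda_2 iE_1-E_0$ and $D_{E_j}E_1=(b_1+i\lambda_2)E_j$ for $j=2,3$; moreover $e_2(\lambda_2)=e_3(\lambda_2)=e_2(b_1)=e_3(b_1)=0$, $e_1(\lambda_2)=2\lambda_2b_1$ and $e_1(b_1)=-(1+b_1^2+3\lambda_2^2)$. *)

(* Defs.v *)
From HB Require Import structures.
From mathcomp Require Import all_boot all_order all_algebra.
From mathcomp Require Import all_classical all_reals all_analysis.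
Set Implicit Arguments. Unset Strict Implicit. Unset Printing Implicit Defensive.
Import Order.TTheory GRing.Theory Num.Theory.
Import numFieldNormedType.Exports.
Local Open Scope ring_scope.

(* C^4 = R^8 realised as pairs (real part, imaginary part) of vectors of R^4. *)
Definition C4 (R : realType) := ('rV[R]_4 * 'rV[R]_4)%type.

Definition cmul (R : realType) (a b : R) (z : C4 R) : C4 R :=
  (a *: z.1 - b *: z.2, a *: z.2 + b *: z.1).

Definition iC (R : realType) (z : C4 R) : C4 R := cmul 0 1 z.

(* the Euclidean (real) inner product  <z,w> = Re(z . conj w)  of C^4 = R^8 *)
Definition inner (R : realType) (z w : C4 R) : R :=
  \sum_(k < 4) (z.1 0 k * w.1 0 k + z.2 0 k * w.2 0 k).

Definition Vfield (R : realType) (b1 lam : 'rV[R]_3 -> R)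
    (E0 E1 : 'rV[R]_3 -> C4 R) (x : 'rV[R]_3) : C4 R :=
  let s := Num.sqrt (1 + b1 x ^+ 2 + lam x ^+ 2) in
  (s^-1) *: (cmul (- b1 x) (- lam x) (E0 x) + E1 x).

(* Main.v *)
Require Import Defs.
From HB Require Import structures.
From mathcomp Require Import all_boot all_order all_algebra.
From mathcomp Require Import all_classical all_reals all_analysis.
From mathcomp Require Import ring lra.
Import Order.TTheory GRing.Theory Num.Theory.
Import numFieldNormedType.Exports.
Local Open Scope classical_set_scope.
Local Open Scope ring_scope.


Section Alg.
Variable R : realType.
Implicit Types (z w u : C4 R) (a b c d : R).

Lemma C4eq z w : z.1 = w.1 -> z.2 = w.2 -> z = w.
Proof. by case: z w => ? ? [? ?] /= -> ->. Qed.

Lemma iCE z : iC z = (- z.2, z.1).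
Proof. by rewrite /iC /cmul !scale0r !scale1r !add0r. Qed.

Lemma cmulE a b z : cmul a b z = a *: z + b *: iC z.
Proof. by rewrite iCE; apply: C4eq => /=; rewrite ?scalerN // addrC. Qed.

Lemma iC_lin a z w : iC (a *: z + w) = a *: iC z + iC w.
Proof. by rewrite !iCE; apply: C4eq => /=; rewrite ?opprD ?scalerN. Qed.

Lemma iCZ a z : iC (a *: z) = a *: iC z.
Proof. by rewrite !iCE; apply: C4eq => /=; rewrite ?scalerN. Qed.
Lemma iCD z w : iC (z + w) = iC z + iC w.
Proof. by rewrite !iCE; apply: C4eq => /=; rewrite ?opprD. Qed.
Lemma iCN z : iC (- z) = - iC z.
Proof. by rewrite !iCE. Qed.
Lemma iCK z : iC (iC z) = - z.
Proof. by rewrite !iCE. Qed.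
Lemma iC0 : iC 0 = 0 :> C4 R.
Proof. by rewrite iCE; apply: C4eq => /=; rewrite ?oppr0. Qed.

Lemma innerC z w : inner z w = inner w z.
Proof. by apply: eq_bigr => k _; rewrite mulrC [z.2 0 k * _]mulrC. Qed.

Lemma innerDl z w u : inner (z + w) u = inner z u + inner w u.
Proof.
rewrite /inner -big_split /=; apply: eq_bigr => k _; rewrite !mxE; ring.
Qed.

Lemma innerZl a z w : inner (a *: z) w = a * inner z w.
Proof.
rewrite /inner mulr_sumr; apply: eq_bigr => k _; rewrite !mxE; ring.
Qed.

Lemma innerNl z w : inner (- z) w = - inner z w.
Proof. by rewrite -scaleN1r innerZl mulN1r. Qed.

Lemma innerDr z w u : inner u (z + w) = inner u z + inner u w.
Proof. by rewrite innerC innerDl !(innerC u). Qed.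
Lemma innerZr a z w : inner w (a *: z) = a * inner w z.
Proof. by rewrite innerC innerZl innerC. Qed.
Lemma innerNr z w : inner w (- z) = - inner w z.
Proof. by rewrite innerC innerNl innerC. Qed.
Lemma inner0l z : inner 0 z = 0.
Proof. by rewrite -(scale0r 0) innerZl mul0r. Qed.

Lemma inner_iCl z w : inner (iC z) w = - inner z (iC w).
Proof.
rewrite !iCE /inner -sumrN; apply: eq_bigr => k _ /=; rewrite !mxE; ring.
Qed.
Lemma inner_iC2 z w : inner (iC z) (iC w) = inner z w.
Proof. by rewrite inner_iCl iCK innerNr opprK. Qed.
Lemma inner_iC_self z : inner z (iC z) = 0.
Proof.
have h : inner z (iC z) = - inner z (iC z).
  by rewrite -inner_iCl innerC.
lra.
Qed.

Lemma inner_self_eq0 z : inner z z = 0 -> z = 0.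
Proof.
move=> h.
have hk : forall k : 'I_4, z.1 0 k * z.1 0 k + z.2 0 k * z.2 0 k = 0.
  move=> k; move/eqP: h; rewrite psumr_eq0; last first.
    by move=> i _; nra.
  by move/allP => /(_ k (mem_index_enum _)) /implyP /(_ isT) /eqP.
apply: C4eq; apply/matrixP => i k; rewrite (ord1 i) !mxE /=;
  have := hk k; nra.
Qed.
End Alg.

Section Diff.
Variables (R : realType) (V W : normedModType R).

Definition sclW (a : R^o) (w : W) : W := a *: w.

Lemma sclW_is_bilinear :
  bilinear_for
    (GRing.Scale.Law.clone _ _ *:%R _) (GRing.Scale.Law.clone _ _ *:%R _)
    sclW.
Proof.
split=> [u'|u] a x y /=; rewrite /sclW.
- by rewrite scalerDl scalerA.
- by rewrite scalerDr !scalerA mulrC.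
Qed.
HB.instance Definition _ := bilinear_isBilinear.Build R R W W _ _ sclW
  sclW_is_bilinear.

Lemma differentiableZl' (k : V -> R) (f : V -> W) x :
  differentiable k x -> differentiable f x ->
  differentiable (fun y => k y *: f y) x.
Proof.
move=> dk df.
have -> : (fun y => k y *: f y) = (fun p => sclW p.1 p.2) \o (fun y => (k y, f y)).
  by [].
apply: differentiable_comp; first exact: differentiable_pair.
apply: (@differentiable_bilin _ _ _ _ sclW).
by move=> p; apply: (@scale_continuous _ _ (p.1, p.2)).
Qed.

End Diff.

Section C.
Variable R : realType.
Lemma iC_continuous : continuous (@iC R).
Proof.
move=> z; rewrite (_ : @iC R = fun z => (- z.2, z.1)); last by rewrite funeqE => ?; rewrite iCE.
apply: (cvg_pair (G:=nbhs (- z.2)) (H:=nbhs z.1)) => /=.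
  apply: cvgN; exact: cvg_snd.
exact: cvg_fst.
Qed.

Lemma iC_is_linear : linear (@iC R).
Proof. by move=> a z w; rewrite !iCE; apply/pair_equal_spec; split => /=; rewrite ?scalerN ?opprD. Qed.
HB.instance Definition _ := GRing.isLinear.Build R (C4 R) (C4 R) _ (@iC R) iC_is_linear.

Lemma differentiable_iC (V : normedModType R) (f : V -> C4 R) x :
  differentiable f x -> differentiable (fun y => iC (f y)) x.
Proof.
move=> df; apply: (@differentiable_comp _ _ _ _ f (@iC R)) => //.
exact/linear_differentiable/iC_continuous.
Qed.
End C.

Lemma span3 (R : realType) (e : 'I_3 -> 'rV[R]_3) :
  (forall a : 'rV[R]_3, \sum_j a 0 j *: e j = 0 -> a = 0) ->
  forall u : 'rV[R]_3, exists a : 'rV[R]_3, u = \sum_j a 0 j *: e j.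
Proof.
move=> inj u.
pose M : 'M[R]_3 := \matrix_j e j.
have EM (a : 'rV[R]_3) : a *m M = \sum_j a 0 j *: e j.
  by rewrite mulmx_sum_row; apply: eq_bigr => j _; rewrite rowK.
have fM : row_free M.
  rewrite -kermx_eq0; apply/eqP/matrixP => i j; rewrite mxE.
  have := mulmx_ker M => /(congr1 (row i)); rewrite row_mul row0 EM => /inj.
  by move/(congr1 (fun a : 'rV[R]_3 => a 0 j)); rewrite !mxE.
have : row_full M by rewrite row_full_unit -row_free_unit.
case/row_fullP => B HB.
exists (u *m B); rewrite -EM -mulmxA HB mulmx1 //.
Qed.

Section Der.
Variables (R : realType) (V W W' : normedModType R).

Lemma is_deriveZl (k : V -> R) (f : V -> W) x v dk df :
  is_derive x v k dk -> is_derive x v f df ->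
  is_derive x v (fun y => k y *: f y) (k x *: df + dk *: f x).
Proof.
move=> [dkx <-] [dfx <-].
have H : (fun h => h^-1 *: (((fun y => k y *: f y) \o shift x) (h *: v) - k x *: f x)) @
  0^' --> k x *: 'D_v f x + 'D_v k x *: f x.
  evar (fg : R -> W); rewrite [X in X @ _](_ : _ = fg) /=; last first.
    rewrite funeqE => h.
    have -> : k (h *: v + x) *: f (h *: v + x) - k x *: f x =
      k (h *: v + x) *: (f (h *: v + x) - f x) + (k (h *: v + x) - k x) *: f x.
      by rewrite scalerBr scalerBl addrA subrK.
    rewrite scalerDr scalerA mulrC -scalerA.
    by rewrite [_ *: (_ *: f x)]scalerA /fg.
  apply: cvgD; last first.
    have := cvgZr_tmp (a:=f x) dkx.
by move=> h; apply: h.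

  apply: cvg_comp2 (@scale_continuous _ _ (_, _)) => /=; last exact: dfx.
  suff : {for 0, continuous (fun h : R => k(h *: v + x))}.
    by move=> /continuous_withinNx; rewrite scale0r add0r.
  exact/differentiable_continuous/derivable1_diffP/(derivable1P _ _ _).1.
split; first by apply/cvg_ex; eexists; exact: H.
exact: cvg_lim H.
Qed.

Lemma is_derive_lin (L : W -> W') (f : V -> W) x v df :
  (forall a z w, L (a *: z + w) = a *: L z + L w) -> continuous L ->
  is_derive x v f df -> is_derive x v (L \o f) (L df).
Proof.
move=> Ll Lc [dfx <-].
have L0 : L 0 = 0.
  have := Ll 1 0 0; rewrite !scale1r addr0 => /(congr1 (fun t => t - L 0)) /=.
  by rewrite subrr addrK => <-.
have LB z w : L (z - w) = L z - L w.
  by rewrite -[z - w]addrC -scaleN1r Ll scaleN1r addrC.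
have LZ a z : L (a *: z) = a *: L z by rewrite -[a *: z]addr0 Ll L0 addr0.
have H : (fun h => h^-1 *: ((L \o f \o shift x) (h *: v) - L (f x))) @ 0^' --> L ('D_v f x).
  rewrite (_ : (fun h => _) = L \o (fun h => h^-1 *: ((f \o shift x) (h *: v) - f x))); last first.
    by rewrite funeqE => h /=; rewrite LZ LB.
  apply: cvg_comp; first exact: dfx.
  exact: Lc.
split; first by apply/cvg_ex; eexists; exact: H.
exact: cvg_lim H.
Qed.

Lemma is_derive_line (f : V -> W) x v a df :
  is_derive (a *: v + x) v f df <-> is_derive a 1 (fun h : R => f (h *: v + x)) df.
Proof.
have E : (fun h : R => h^-1 *: ((f \o shift (a *: v + x)) (h *: v) - f (a *: v + x))) =
         (fun h : R => h^-1 *: (((fun h : R => f (h *: v + x)) \o shift a) (h *: 1) -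
            (fun h : R => f (h *: v + x)) a)).
  by rewrite funeqE => h /=; rewrite scaler1 scalerDl addrA.
split=> -[d e]; split.
- by move: d; rewrite /derivable E.
- by move: e; rewrite /derive E.
- by rewrite /derivable E.
- by rewrite /derive E.
Qed.

End Der.

Lemma coord1_continuous (R : realType) (k : 'I_4) : continuous (fun z : C4 R => z.1 0 k).
Proof.
move=> z; apply: (@continuous_comp _ _ _ fst (fun M : 'rV[R]_4 => M 0 k)).
  exact: cvg_fst.
exact: coord_continuous.
Qed.
Lemma coord2_continuous (R : realType) (k : 'I_4) : continuous (fun z : C4 R => z.2 0 k).
Proof.
move=> z; apply: (@continuous_comp _ _ _ snd (fun M : 'rV[R]_4 => M 0 k)).
  exact: cvg_snd.
exact: coord_continuous.
Qed.

Lemma loc_const (R : realType) (U : set 'rV[R]_3) (W : 'rV[R]_3 -> C4 R) :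
  open U -> (forall z, U z -> forall u, is_derive z u W 0) ->
  forall x, U x -> exists2 r : R, 0 < r & (forall y, ball x r y -> U y /\ W y = W x).
Proof.
move=> oU dW x Ux.
have : nbhs x U by apply: open_nbhs_nbhs.
case/nbhs_ballP => r r0 BU; exists r => // y Bxy; split; first exact: BU.
have inB s : s \in `[0, 1]%R -> U (s *: (y - x) + x).
  rewrite in_itv /= => /andP[s0 s1]; apply: BU.
  move: Bxy; rewrite -ball_normE /= => Bxy.
  rewrite opprD addrC addrNK normrN normrZ distrC (ger0_norm s0).
  by apply: le_lt_trans Bxy; have := normr_ge0 (x - y); nra.
have dl (s : R) : s \in `[0, 1]%R -> is_derive s 1 (fun h : R => W (h *: (y - x) + x)) 0.
  move=> /inB Us; apply: (@is_derive_line _ _ _ W x (y - x) s 0).1.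
  exact: dW.
have key (L : C4 R -> R) : (forall a z w, L (a *: z + w) = a *: L z + L w) -> continuous L ->
    L 0 = 0 -> L (W y) = L (W x).
  move=> Ll Lc L0.
  have dL (s : R) : s \in `[0, 1]%R -> is_derive s 1 (L \o (fun h : R => W (h *: (y - x) + x))) 0.
    move=> /dl d; rewrite -L0.
    exact: (@is_derive_lin _ _ _ _ L (fun h : R => W (h *: (y - x) + x)) s 1 0 Ll Lc d).
  pose g : R -> R := L \o (fun h : R => W (h *: (y - x) + x)).
  have H := @MVT_segment R g (fun=> 0) 0 1 ler01.
  have H1 : forall s : R, s \in `]0, 1[%R -> is_derive s 1 g 0.
    move=> s s01; apply: dL.
    move: s01; rewrite !in_itv /= => /andP[a b].
    by rewrite !ltW.
  have H2 : {within `[0, 1], continuous g}.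
    apply: derivable_within_continuous => s /dL [d _]; exact: d.
  have [c _] := H H1 H2.
  rewrite /g /= mul0r scale1r scale0r add0r subrK => /eqP; rewrite subr_eq0 => /eqP.
  by [].
apply: C4eq; apply/matrixP => i k; rewrite (ord1 i).
- apply: (key (fun z => z.1 0 k)); last by rewrite mxE.
    by move=> a z w /=; rewrite !mxE.
  exact: coord1_continuous.
- apply: (key (fun z => z.2 0 k)); last by rewrite mxE.
    by move=> a z w /=; rewrite !mxE.
  exact: coord2_continuous.
Qed.


Lemma conn_const (R : realType) (U : set 'rV[R]_3) (W : 'rV[R]_3 -> C4 R) :
  open U -> connected U -> (forall z, U z -> forall u, is_derive z u W 0) ->
  forall x0 x, U x0 -> U x -> W x = W x0.
Proof.
move=> oU cU dW x0 x Ux0 Ux.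
pose B := [set y | U y /\ W y = W x0].
have LC := @loc_const R U W oU dW.
suff BU : B = U by have [] : B x by rewrite BU.
apply: cU.
- by exists x0.
- exists B.
    rewrite openE => y [Uy Wy]; rewrite /interior.
    have [r r0 H] := LC y Uy; apply/nbhs_ballP; exists r => // z /H [Uz Wzy].
    by rewrite /B /=; split => //; rewrite Wzy.
  by apply/seteqP; split => y; [move=> [Uy Wy]|move=> [_ ?]].
- exists (closure B); first exact: closed_closure.
  apply/seteqP; split => y.
    by move=> By; split; [case: By|exact: subset_closure].
  move=> [Uy cy]; split => //.
  have [r r0 H] := LC y Uy.
  have : nbhs y (ball y r) by apply/nbhs_ballP; exists r.
  move=> /cy [z [[Uz Wz] /H [_ Wzy]]].
  by rewrite -Wzy.
Qed.
Arguments is_deriveZl {R V W k f x v dk df}.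
Arguments is_derive_lin {R V W W' L f x v df}.


Lemma is_derive_compR (R : realType) (V : normedModType R) (g : V -> R) (phi : R -> R) x v dg dphi :
  is_derive x v g dg -> is_derive (g x) 1 phi dphi ->
  is_derive x v (phi \o g) (dphi * dg).
Proof.
move=> hg hphi.
have h0 : 0 *: v + x = x by rewrite scale0r add0r.
have hg' : is_derive (0 : R) 1 (fun h : R => g (h *: v + x)) dg.
  by apply: (@is_derive_line _ _ _ g x v 0 dg).1; rewrite h0.
suff : is_derive (0 *: v + x) v (phi \o g) (dphi * dg) by rewrite h0.
apply: (@is_derive_line _ _ _ (phi \o g) x v 0 (dphi * dg)).2.
have hphi' : is_derive ((fun h : R => g (h *: v + x)) 0) 1 phi dphi by rewrite /= h0.
exact: (@is_derive1_comp R phi (fun h : R => g (h *: v + x)) 0 dphi dg hphi' hg').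
Qed.

Lemma is_deriveVR (R : realType) (V : normedModType R) (f : V -> R) x v df :
  f x != 0 -> is_derive x v f df ->
  is_derive x v (fun y => (f y)^-1) (- (f x) ^- 2 *: df).
Proof.
move=> fx0 [d <-]; split; first exact: derivableV.
exact: deriveV.
Qed.
Arguments is_derive_compR {R V g phi x v dg dphi}.
Arguments is_deriveVR {R V f x v df}.


Section Coord.
Variable R : realType.
Implicit Types (z w : C4 R) (a b : R).
Lemma C4D1 z w : (z + w).1 = z.1 + w.1. Proof. by []. Qed.
Lemma C4D2 z w : (z + w).2 = z.2 + w.2. Proof. by []. Qed.
Lemma C4Z1 a z : (a *: z).1 = a *: z.1. Proof. by []. Qed.
Lemma C4Z2 a z : (a *: z).2 = a *: z.2. Proof. by []. Qed.
Lemma C4N1 z : (- z).1 = - z.1. Proof. by []. Qed.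
Lemma C4N2 z : (- z).2 = - z.2. Proof. by []. Qed.
Lemma C4B1 z w : (z - w).1 = z.1 - w.1. Proof. by []. Qed.
Lemma C4B2 z w : (z - w).2 = z.2 - w.2. Proof. by []. Qed.
Lemma C401 : (0 : C4 R).1 = 0. Proof. by []. Qed.
Lemma C402 : (0 : C4 R).2 = 0. Proof. by []. Qed.
Lemma iC1 z : (iC z).1 = - z.2. Proof. by rewrite iCE. Qed.
Lemma iC2 z : (iC z).2 = z.1. Proof. by rewrite iCE. Qed.
Lemma cmul1 a b z : (cmul a b z).1 = a *: z.1 - b *: z.2. Proof. by []. Qed.
Lemma cmul2 a b z : (cmul a b z).2 = a *: z.2 + b *: z.1. Proof. by []. Qed.
Lemma scaleRE a b : a *: (b : R^o) = a * b. Proof. by []. Qed.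
End Coord.

Ltac coordE := apply: C4eq; apply/matrixP => ? ?;
  rewrite ?(C4D1, C4D2, C4Z1, C4Z2, C4N1, C4N2, C4B1, C4B2, C401, C402, iC1, iC2, cmul1, cmul2);
  rewrite ?(C4D1, C4D2, C4Z1, C4Z2, C4N1, C4N2, C4B1, C4B2, C401, C402, iC1, iC2, cmul1, cmul2);
  rewrite ?(C4D1, C4D2, C4Z1, C4Z2, C4N1, C4N2, C4B1, C4B2, C401, C402, iC1, iC2, cmul1, cmul2);
  rewrite !mxE.

Section DV.
Variable R : realType.
Variables (E0 E1 : 'rV[R]_3 -> C4 R) (b1 lam : 'rV[R]_3 -> R).

Lemma dV_gen x e db dl dE0 dE1 :
  is_derive x e b1 db -> is_derive x e lam dl ->
  is_derive x e E0 dE0 -> is_derive x e E1 dE1 ->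
  is_derive x e (Vfield b1 lam E0 E1)
   ((Num.sqrt (1 + b1 x ^+ 2 + lam x ^+ 2))^-1 *:
      ((- db) *: E0 x + (- b1 x) *: dE0 + (- dl) *: iC (E0 x) + (- lam x) *: iC dE0 + dE1)
    + (- (Num.sqrt (1 + b1 x ^+ 2 + lam x ^+ 2)) ^- 2 *:
        ((2 * Num.sqrt (1 + b1 x ^+ 2 + lam x ^+ 2))^-1 *
         (b1 x *: db + b1 x *: db + (lam x *: dl + lam x *: dl))))
      *: (cmul (- b1 x) (- lam x) (E0 x) + E1 x)).
Proof.
move=> hb hl h0 h1.
pose q := cst 1 + b1 * b1 + lam * lam.
have hq : is_derive x e q (b1 x *: db + b1 x *: db + (lam x *: dl + lam x *: dl)).
  by apply: is_derive_eq; rewrite add0r.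
have qE : q x = 1 + b1 x ^+ 2 + lam x ^+ 2 by rewrite !expr2.
have qpos : 0 < q x by rewrite qE; nra.
have hs : is_derive x e (Num.sqrt \o q)
   ((2 * Num.sqrt (q x))^-1 * (b1 x *: db + b1 x *: db + (lam x *: dl + lam x *: dl))).
  apply: is_derive_compR => //; exact: is_derive1_sqrt.
have s0 : Num.sqrt (q x) != 0 by rewrite gt_eqF // sqrtr_gt0.
have hsi := is_deriveVR (f := Num.sqrt \o q) s0 hs.
have hP : is_derive x e (fun y => (- b1 y) *: E0 y + (- lam y) *: iC (E0 y) + E1 y)
    ((- db) *: E0 x + (- b1 x) *: dE0 + (- dl) *: iC (E0 x) + (- lam x) *: iC dE0 + dE1).
  have hiC : is_derive x e (fun y => iC (E0 y)) (iC dE0).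
    apply: (is_derive_lin (L:=@iC R) _ (@iC_continuous R) h0).
    exact: iC_lin.
  have hN1 : is_derive x e (fun y => - b1 y) (- db) by apply: is_deriveN.
  have hN2 : is_derive x e (fun y => - lam y) (- dl) by apply: is_deriveN.
  have := is_deriveZl hN1 h0; have := is_deriveZl hN2 hiC => H2 H1.
  apply: is_derive_eq.
  by rewrite (addrC (- b1 x *: dE0)) (addrC (- lam x *: _)) !addrA.
have VE : Vfield b1 lam E0 E1 = fun y => ((Num.sqrt \o q) y)^-1 *:
    ((- b1 y) *: E0 y + (- lam y) *: iC (E0 y) + E1 y).
  apply/funext => y; rewrite /Vfield /= cmulE.
  by rewrite !expr2.
rewrite VE; apply: is_derive_eq; first exact: (is_deriveZl hsi hP).
rewrite /= qE cmulE.
by rewrite addrC.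
Qed.

Lemma dV_e23 x e dE0 :
  is_derive x e b1 0 -> is_derive x e lam 0 ->
  is_derive x e E0 dE0 -> is_derive x e E1 (cmul (b1 x) (lam x) dE0) ->
  is_derive x e (Vfield b1 lam E0 E1) 0.
Proof.
move=> hb hl h0 h1; apply: (is_derive_eq (dV_gen _ _ _ _ _ _ hb hl h0 h1)).
by coordE; rewrite ?scaleRE; ring.
Qed.

Lemma dV_e1 x e :
  is_derive x e b1 (- (1 + b1 x ^+ 2 + 3 * lam x ^+ 2)) ->
  is_derive x e lam (2 * lam x * b1 x) ->
  is_derive x e E0 (E1 x) -> is_derive x e E1 (iC ((4 * lam x) *: E1 x) - E0 x) ->
  is_derive x e (Vfield b1 lam E0 E1) (iC ((3 * lam x) *: Vfield b1 lam E0 E1 x)).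
Proof.
move=> hb hl h0 h1; apply: (is_derive_eq (dV_gen _ _ _ _ _ _ hb hl h0 h1)).
rewrite /Vfield /=.
have qp : 0 <= 1 + b1 x ^+ 2 + lam x ^+ 2 by nra.
have hs : Num.sqrt (1 + b1 x ^+ 2 + lam x ^+ 2) ^+ 2 = 1 + b1 x ^+ 2 + lam x ^+ 2.
  by rewrite sqr_sqrtr.
have s0 : Num.sqrt (1 + b1 x ^+ 2 + lam x ^+ 2) != 0.
  by rewrite gt_eqF // sqrtr_gt0; nra.
move: hs s0; set s := Num.sqrt _ => hs s0.
by coordE; rewrite ?scaleRE; field: hs.
Qed.
End DV.


Section DW.
Variable R : realType.
Variables (V : 'rV[R]_3 -> C4 R) (theta : 'rV[R]_3 -> R).

Definition Wf (y : 'rV[R]_3) : C4 R :=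
  cmul (cos (3 * theta y)) (sin (3 * theta y)) (V y).

Lemma dW0 x e c :
  is_derive x e V (iC ((3 * c) *: V x)) -> is_derive x e theta (- c) ->
  is_derive x e Wf 0.
Proof.
move=> hV ht.
have hg : is_derive x e ((3 : R) \*: theta) (3 *: - c) by exact: is_deriveZ.
have hc : is_derive x e (cos \o ((3 : R) \*: theta)) (- sin (3 * theta x) * (3 *: - c)).
  exact: (is_derive_compR hg (is_derive_cos _)).
have hs : is_derive x e (sin \o ((3 : R) \*: theta)) (cos (3 * theta x) * (3 *: - c)).
  exact: (is_derive_compR hg (is_derive_sin _)).
have hiC : is_derive x e (fun y => iC (V y)) (iC (iC ((3 * c) *: V x))).
  apply: (is_derive_lin (L:=@iC R) _ (@iC_continuous R) hV).
  exact: iC_lin.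
have H1 := is_deriveZl hc hV.
have H2 := is_deriveZl hs hiC.
have WE : Wf = fun y => (cos \o ((3 : R) \*: theta)) y *: V y +
                        (sin \o ((3 : R) \*: theta)) y *: iC (V y).
  by apply/funext => y; rewrite /Wf cmulE.
rewrite WE; apply: (is_derive_eq (is_deriveD H1 H2)).
by coordE; rewrite ?scaleRE /=; ring.
Qed.
End DW.

Section Dif.
Variable R : realType.

Lemma diff_sqrt (r : R) : 0 < r -> differentiable (@Num.sqrt R) r.
Proof. by move=> r0; apply/derivable1_diffP; case: (is_derive1_sqrt r0). Qed.

Lemma diff_cos (r : R) : differentiable (@cos R) r.
Proof. by apply/derivable1_diffP; case: (is_derive_cos r). Qed.
Lemma diff_sin (r : R) : differentiable (@sin R) r.
Proof. by apply/derivable1_diffP; case: (is_derive_sin r). Qed.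

Lemma diffV_gen (E0 E1 : 'rV[R]_3 -> C4 R) (b1 lam : 'rV[R]_3 -> R) x :
  differentiable E0 x -> differentiable E1 x -> differentiable b1 x ->
  differentiable lam x -> differentiable (Vfield b1 lam E0 E1) x.
Proof.
move=> d0 d1 db dl.
pose q := cst 1 + b1 * b1 + lam * lam.
have qE : q x = 1 + b1 x ^+ 2 + lam x ^+ 2 by rewrite !expr2.
have qpos : 0 < q x by rewrite qE; nra.
have dq : differentiable q x.
  apply: differentiableD; first apply: differentiableD => //.
  - exact: differentiableM.
  - exact: differentiableM.
have ds : differentiable (Num.sqrt \o q) x.
  by apply: differentiable_comp => //; exact: diff_sqrt.
have s0 : (Num.sqrt \o q) x != 0 by rewrite /= gt_eqF // sqrtr_gt0.
have dsi : differentiable (fun y => ((Num.sqrt \o q) y)^-1) x.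
  exact: differentiableV.
have VE : Vfield b1 lam E0 E1 = fun y => ((Num.sqrt \o q) y)^-1 *:
    ((- b1 y) *: E0 y + (- lam y) *: iC (E0 y) + E1 y).
  apply/funext => y; rewrite /Vfield /= cmulE.
  by rewrite !expr2.
rewrite VE; apply: differentiableZl' => //.
apply: differentiableD => //; apply: differentiableD.
- apply: differentiableZl' => //; exact: differentiableN.
- apply: differentiableZl'; first exact: differentiableN.
  exact: differentiable_iC.
Qed.

Lemma diffW_gen (V : 'rV[R]_3 -> C4 R) (theta : 'rV[R]_3 -> R) x :
  differentiable V x -> differentiable theta x -> differentiable (@Wf R V theta) x.
Proof.
move=> dV dt.
have dg : differentiable ((3 : R) \*: theta) x by exact: differentiableZ.
have WE : @Wf R V theta = fun y => (cos \o ((3 : R) \*: theta)) y *: V y +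
                        (sin \o ((3 : R) \*: theta)) y *: iC (V y).
  by apply/funext => y; rewrite /Wf cmulE.
rewrite WE; apply: differentiableD.
- apply: differentiableZl' => //; apply: differentiable_comp => //; exact: diff_cos.
- apply: differentiableZl'; last exact: differentiable_iC.
  apply: differentiable_comp => //; exact: diff_sin.
Qed.
End Dif.


Lemma inner_suml (R : realType) n (F : 'I_n -> C4 R) w :
  inner (\sum_(j < n) F j) w = \sum_(j < n) inner (F j) w.
Proof.
elim/big_rec2: _ => [|j a b _ <-]; first exact: inner0l.
exact: innerDl.
Qed.

Lemma dzero (R : realType) (W E0 : 'rV[R]_3 -> C4 R) (ev : 'I_3 -> 'rV[R]_3)
    (Ev : 'I_3 -> C4 R) z :
  differentiable E0 z -> (forall j, is_derive z (ev j) E0 (Ev j)) ->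
  (forall j k, inner (Ev j) (Ev k) = (j == k)%:R) ->
  differentiable W z -> (forall j, is_derive z (ev j) W 0) ->
  forall u, is_derive z u W 0.
Proof.
move=> d0 hE horth dW hW.
have dE j : 'd E0 z (ev j) = Ev j by rewrite -deriveE //; exact: derive_val.
have dWj j : 'd W z (ev j) = 0 by rewrite -deriveE //; exact: derive_val.
have inj : forall a : 'rV[R]_3, \sum_j a 0 j *: ev j = 0 -> a = 0.
  move=> a H.
  have : 'd E0 z (\sum_j a 0 j *: ev j) = 0 by rewrite H linear0.
  rewrite linear_sum /=.
  under eq_bigr do rewrite linearZ dE.
  move=> Hs; apply/matrixP => i k; rewrite (ord1 i) mxE.
  have := congr1 (fun w => inner w (Ev k)) Hs; rewrite /= inner_suml inner0l.
  rewrite (bigD1 k) //= innerZl horth eqxx mulr1 big1 ?addr0 //.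
  by move=> j jk; rewrite innerZl horth (negbTE jk) mulr0.
move=> u; have [a ->] := @span3 R ev inj u.
have dd : derivable W z (\sum_j a 0 j *: ev j) by exact: diff_derivable.
apply: (DeriveDef dd).
rewrite (deriveE _ dW) linear_sum /=; apply: big1 => j _.
by rewrite linearZ /= dWj scaler0.
Qed.


Section N.
Variable R : realType.
Implicit Types (z w : C4 R) (a b c s : R).

Lemma inner_cmul c s z : inner (cmul c s z) (cmul c s z) = (c ^+ 2 + s ^+ 2) * inner z z.
Proof.
rewrite cmulE !(innerDl, innerDr, innerZl, innerZr) inner_iC2 inner_iC_self.
rewrite inner_iCl inner_iC_self; ring.
Qed.

Lemma cmul_inv g z : cmul (cos (- g)) (sin (- g)) (cmul (cos g) (sin g) z) = z.
Proof.
have e : forall t : R, t = (cos g ^+ 2 + sin g ^+ 2) * t by move=> t; rewrite cos2Dsin2 mul1r.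
by rewrite cosN sinN; coordE; rewrite ?scaleRE [X in _ = X]e; ring.
Qed.

Lemma inner_V (E0 E1 : C4 R) b l :
  inner E0 E0 = 1 -> inner E1 E1 = 1 -> inner E1 E0 = 0 -> inner E1 (iC E0) = 0 ->
  let s := Num.sqrt (1 + b ^+ 2 + l ^+ 2) in
  inner (s^-1 *: (cmul (- b) (- l) E0 + E1)) (s^-1 *: (cmul (- b) (- l) E0 + E1)) = 1.
Proof.
move=> h00 h11 h10 h1i s.
have qp : 0 <= 1 + b ^+ 2 + l ^+ 2 by nra.
have hs : s ^+ 2 = 1 + b ^+ 2 + l ^+ 2 by rewrite sqr_sqrtr.
have s0 : s != 0 by rewrite gt_eqF // sqrtr_gt0; nra.
have h01 : inner E0 E1 = 0 by rewrite innerC.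
have hi1 : inner (iC E0) E1 = 0 by rewrite innerC.
have hi0 : inner (iC E0) E0 = 0 by rewrite innerC inner_iC_self.
rewrite cmulE !(innerDl, innerDr, innerZl, innerZr) inner_iC2 inner_iC_self.
rewrite h00 h11 h10 h1i h01 hi1 hi0.
by field: hs.
Qed.
End N.


Theorem mainTheorem3 (R : realType) (U : set 'rV[R]_3)
  (e1 e2 e3 : 'rV[R]_3 -> 'rV[R]_3)
  (E0 E1 E2 E3 : 'rV[R]_3 -> C4 R)
  (lam b1 theta : 'rV[R]_3 -> R) :
  open U -> connected U ->
  (* regularity *)
  (forall x, U x -> [/\ differentiable E0 x, differentiable E1 x,
                        differentiable E2 x & differentiable E3 x]) ->
  (forall x, U x -> [/\ differentiable lam x, differentiable b1 x
                      & differentiable theta x]) ->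
  (* E0 is a horizontal lift into S^7, E_j = dE0(e_j) *)
  (forall x, U x -> inner (E0 x) (E0 x) = 1) ->
  (forall x, U x -> [/\ is_derive x (e1 x) E0 (E1 x),
                        is_derive x (e2 x) E0 (E2 x)
                      & is_derive x (e3 x) E0 (E3 x)]) ->
  (forall x, U x -> forall (j : 'I_3),
       inner (nth E0 [:: E1; E2; E3] j x) (E0 x) = 0 /\
       inner (nth E0 [:: E1; E2; E3] j x) (iC (E0 x)) = 0) ->
  (* e1, e2, e3 orthonormal for the induced metric; M Lagrangian *)
  (forall x, U x -> forall (j k : 'I_3),
       inner (nth E0 [:: E1; E2; E3] j x) (nth E0 [:: E1; E2; E3] k x)
         = (j == k)%:R /\
       inner (nth E0 [:: E1; E2; E3] j x) (iC (nth E0 [:: E1; E2; E3] k x))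
         = 0) ->
  (* structure equations of the standing setup *)
  (forall x, U x -> lam x != 0) ->
  (forall x, U x ->
     [/\ is_derive x (e1 x) E1 (iC ((4 * lam x) *: E1 x) - E0 x),
         is_derive x (e2 x) E1 (cmul (b1 x) (lam x) (E2 x))
       & is_derive x (e3 x) E1 (cmul (b1 x) (lam x) (E3 x))]) ->
  (forall x, U x ->
     [/\ is_derive x (e2 x) lam 0, is_derive x (e3 x) lam 0,
         is_derive x (e2 x) b1 0 & is_derive x (e3 x) b1 0]) ->
  (forall x, U x ->
     is_derive x (e1 x) lam (2 * lam x * b1 x) /\
     is_derive x (e1 x) b1 (- (1 + b1 x ^+ 2 + 3 * lam x ^+ 2))) ->
  (* the function theta *)
  (forall x, U x ->
     [/\ is_derive x (e2 x) theta 0, is_derive x (e3 x) theta 0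
       & is_derive x (e1 x) theta (- lam x)]) ->
  let V := Vfield b1 lam E0 E1 in
  (forall x, U x ->
     [/\ is_derive x (e2 x) V 0, is_derive x (e3 x) V 0
       & is_derive x (e1 x) V (iC ((3 * lam x) *: V x))]) /\
  exists (v : C4 R) (t : 'rV[R]_3 -> R),
    [/\ inner v v = 1,
        (forall x, U x ->
           [/\ V x = cmul (cos (t x)) (sin (t x)) v,
               is_derive x (e1 x) t (3 * lam x),
               is_derive x (e2 x) t 0
             & is_derive x (e3 x) t 0])
      & exists c : R, forall x, U x -> theta x + c = - (t x) / 3].

Proof.
move=> oU cU dE dF n0 dE0 hor orth l0 dE1 dlb db1 dth V.
have hV : forall x, U x -> [/\ is_derive x (e2 x) V 0, is_derive x (e3 x) V 0
       & is_derive x (e1 x) V (iC ((3 * lam x) *: V x))].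
  move=> x Ux.
  have [d1 d2 d3] := dE0 x Ux.
  have [f1 f2 f3] := dE1 x Ux.
  have [l2 l3 b2 b3] := dlb x Ux.
  have [l1 b1'] := db1 x Ux.
  split.
  - exact: (@dV_e23 R E0 E1 b1 lam x (e2 x) (E2 x) b2 l2 d2 f2).
  - exact: (@dV_e23 R E0 E1 b1 lam x (e3 x) (E3 x) b3 l3 d3 f3).
  - exact: (@dV_e1 R E0 E1 b1 lam x (e1 x) b1' l1 d1 f1).
split; first exact: hV.
pose Wv := @Wf R V theta.
have dW : forall z, U z -> forall u, is_derive z u Wv 0.
  move=> z Uz.
  have [dz0 dz1 dz2 dz3] := dE z Uz.
  have [dzl dzb dzt] := dF z Uz.
  have [d1 d2 d3] := dE0 z Uz.
  have [t2 t3 t1] := dth z Uz.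
  have [v2 v3 v1] := hV z Uz.
  apply: (@dzero R Wv E0 (fun j => nth e1 [:: e1; e2; e3] j z)
            (fun j => nth E0 [:: E1; E2; E3] j z) z dz0).
  - by case=> [[|[|[|//]]] ?] /=.
  - by move=> j k; have [] := orth z Uz j k.
  - apply: diffW_gen => //.
    exact: diffV_gen.
  - case=> [[|[|[|//]]] ?] /=.
    + exact: (@dW0 R V theta z (e1 z) (lam z) v1 t1).
    + apply: (@dW0 R V theta z (e2 z) 0); last by rewrite oppr0.
      by rewrite mulr0 scale0r iC0.
    + apply: (@dW0 R V theta z (e3 z) 0); last by rewrite oppr0.
      by rewrite mulr0 scale0r iC0.
have [[x0 Ux0]|nU] := pselect (exists x, U x); last first.
  exists ((delta_mx 0 0 : 'rV[R]_4), (0 : 'rV[R]_4)), (fun _ => 0); split.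
  - rewrite /inner !big_ord_recl big_ord0 /= !mxE /=; lra.
  - by move=> x Ux; exfalso; apply: nU; exists x.
  - by exists 0 => x Ux; exfalso; apply: nU; exists x.
exists (Wv x0), (fun y => - (3 * theta y)); split.
- rewrite /Wv /Wf inner_cmul cos2Dsin2 mul1r /V /Vfield /=.
  have [h00 _] := orth x0 Ux0 ord0 ord0.
  have [h10 h1i] := hor x0 Ux0 ord0.
  by apply: inner_V => //; apply: n0.
- move=> x Ux.
  have [t2 t3 t1] := dth x Ux.
  split.
  + rewrite -(@conn_const R U Wv oU cU dW x0 x Ux0 Ux) /Wv /Wf.
    by rewrite cmul_inv.
  + apply: (is_derive_eq (is_deriveN (is_deriveZ (3 : R) t1))).
    by rewrite /= scaleRE mulrN opprK.
  + apply: (is_derive_eq (is_deriveN (is_deriveZ (3 : R) t2))).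
    by rewrite scaler0 oppr0.
  + apply: (is_derive_eq (is_deriveN (is_deriveZ (3 : R) t3))).
    by rewrite scaler0 oppr0.
- by exists 0 => x Ux; rewrite addr0; field.
Qed.
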